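(* Every $A'$-group is a solvable $A$-group, i.e. a solvable finite group all of whose Sylow subgroups are abelian.
   Context: $A'$-groups are defined inductively: (1) finite abelian groups are $A'$-groups; (2) if $\mathcal G$ is an $A'$-group and $H$ is a finite abelian group of order prime to $|\mathcal G|$, then $H\rtimes_\mu\mathcal G$ is an $A'$-group for every action $\mu$ of $\mathcal G$ on $H$; (3) if $\mathcal G_1$ and $\mathcal G_2$ are $A'$-groups, then $\mathcal G_1\times\mathcal G_2$ is an $A'$-group. *)

(* Defs.v *)
From mathcomp Require Import all_boot all_fingroup all_solvable.
Set Implicit Arguments. Unset Strict Implicit. Unset Printing Implicit Defensive.
Local Open Scope group_scope.

(* A'-groups, realised as subgroups of an ambient finite group type gT.
   The external constructions H ⋊_μ G and G1 × G2 are rendered by their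
   internal counterparts: G = H ><| K (H normal abelian complement-pair with
   K) and G = G1 \x G2.  Every abstract A'-group is isomorphic to a group
   satisfying this predicate in a suitable gT and conversely. *)
Inductive Aprime_group (gT : finGroupType) : {group gT} -> Prop :=
| Aprime_abelian (G : {group gT}) :
    abelian G -> Aprime_group G
| Aprime_sdprod (G H K : {group gT}) :
    abelian H -> coprime #|H| #|K| -> Aprime_group K ->
    H ><| K = G -> Aprime_group G
| Aprime_dprod (G G1 G2 : {group gT}) :
    Aprime_group G1 -> Aprime_group G2 -> G1 \x G2 = G -> Aprime_group G.

Definition A_group (gT : finGroupType) (G : {group gT}) : Prop :=
  forall (p : nat) (P : {group gT}), prime p -> p.-Sylow(G) P -> abelian P.

(* Main.v *)
Require Import Defs.
From mathcomp Require Import all_boot all_fingroup all_solvable.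
Set Implicit Arguments. Unset Strict Implicit. Unset Printing Implicit Defensive.
Local Open Scope group_scope.

Lemma aux (gT : finGroupType) (G : {group gT}) :
  Aprime_group G -> solvable G /\
  (forall (p : nat) (P : {group gT}), P \subset G -> p.-group P -> abelian P).
Proof.
elim=> {G}.
- move=> G cG; split; first exact: abelian_sol.
  by move=> p P sPG _; exact: abelianS cG.
- move=> G H K cH coHK _ [solK IHK] defG.
  have [nsHG sKG mulHK nHK tiHK] := sdprod_context defG.
  have solG : solvable G.
    rewrite (series_sol nsHG) abelian_sol //=.
    by rewrite -(isog_sol (sdprod_isog defG)).
  split=> // p P sPG pP.
  have hallH : \pi(H).-Hall(G) H.
    by apply: Hall_pi; rewrite -(coprime_sdprod_Hall_l defG).
  case: (boolP (p \in \pi(H))) => piHp.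
    have piP : \pi(H).-group P by exact: pi_pgroup pP piHp.
    by apply: abelianS cH; rewrite (sub_normal_Hall hallH nsHG sPG).
  have piP : \pi(H)^'.-group P by apply: pi_pgroup pP _.
  have hallK : \pi(H)^'.-Hall(G) K by rewrite -(compl_pHall _ hallH) sdprod_compl.
  have [x Gx sPKx] := Hall_subJ solG hallK sPG piP.
  rewrite -(abelianJ _ x^-1); apply: (IHK p).
    by rewrite sub_conjgV.
  by rewrite pgroupJ.
- move=> G G1 G2 _ [sol1 IH1] _ [sol2 IH2] defG.
  have defG' := dprodWsd defG.
  have [nsG1 sG2 mulG nG tiG] := sdprod_context defG'.
  have solG : solvable G.
    rewrite (series_sol nsG1) sol1 /=.
    by rewrite -(isog_sol (sdprod_isog defG')).
  split=> // p P sPG pP.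
  have [_ _ cG12 _] := dprodP defG.
  have [S1 sylS1] := Sylow_exists p G1.
  have [S2 sylS2] := Sylow_exists p G2.
  have sS1 := pHall_sub sylS1; have sS2 := pHall_sub sylS2.
  have cS12 : S2 \subset 'C(S1).
    apply: subset_trans sS2 _; apply: subset_trans cG12 _.
    by rewrite centS.
  have defS : S1 <*> S2 = S1 * S2 by rewrite cent_joinEr // centsC.
  have tiS : S1 :&: S2 = 1.
    by apply/trivgP; rewrite -tiG setISS.
  have sylS : p.-Sylow(G) (S1 <*> S2).
    apply/pHallP; split.
      by rewrite join_subG (subset_trans sS1) ?(subset_trans sS2) // -mulG ?mulG_subl ?mulG_subr.
    rewrite /= defS TI_cardMg // (card_Hall sylS1) (card_Hall sylS2) -(dprod_card defG).
    by rewrite partnM ?cardG_gt0.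
  have cS : abelian (S1 <*> S2).
    rewrite defS abelianM cS12 andbT.
    by rewrite (IH1 p) ?(IH2 p) ?(pHall_pgroup sylS1) ?(pHall_pgroup sylS2).
  have [x Gx sPSx] := Hall_subJ solG sylS sPG pP.
  by apply: abelianS sPSx _; rewrite abelianJ.
Qed.

Theorem mainTheorem4 (gT : finGroupType) (G : {group gT}) :
  Aprime_group G -> solvable G /\ A_group G.
Proof.
move=> /aux [solG IH]; split=> // p P _ sylP.
exact: (IH p) (pHall_sub sylP) (pHall_pgroup sylP).
Qed.
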